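(* Let $S$ be a left fairly amenable semigroup with left fairly invariant finitely-additive probability measure $\mu$, let $s\in S$, and let $f:S\to[0,\infty)$ be bounded. If $s\ast f$ is bounded (with all defining sums convergent), then $\int (s\ast f)\,d\mu=\int f\,d\mu$.
   Context: For a semigroup $S$, $s\in S$, $A\subseteq S$: $sA=\{sa:a\in A\}$; $s$ acts injectively on the left of $A$ if $a\mapsto sa$ is injective on $A$. A finitely-additive probability measure on $S$ is $\mu:\mathcal P(S)\to[0,1]$, $\mu(S)=1$, additive on disjoint sets; it is left fairly invariant if $\mu(sA)=\mu(A)$ whenever $s$ acts injectively on the left of $A$. $S$ is left fairly amenable if such $\mu$ exists. For bounded $f$, $(s\ast f)(x)=\sum_{t\in S,\ st=x}f(t)$. For a finitely-additive measure, the integral of a non-negative simple function $\sum_i a_i\chi_{A_i}$ (finite sum) is $\sum_i a_i\mu(A_i)$, and for a bounded non-negative $f$, $\int f\,d\mu$ is the supremum of integrals of simple functions $h\le f$. *)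

(* Defs.v *)
From Stdlib Require Import Reals List Classical ClassicalEpsilon ClassicalDescription.
Import ListNotations.
Open Scope R_scope.

Definition associative {S : Type} (op : S -> S -> S) : Prop :=
  forall a b c, op a (op b c) = op (op a b) c.

Definition lmul_set {S : Type} (op : S -> S -> S) (s : S) (A : S -> Prop) : S -> Prop :=
  fun y => exists a, A a /\ y = op s a.

Definition acts_inj_left {S : Type} (op : S -> S -> S) (s : S) (A : S -> Prop) : Prop :=
  forall a b, A a -> A b -> op s a = op s b -> a = b.

Definition fa_prob_measure {S : Type} (mu : (S -> Prop) -> R) : Prop :=
  (forall A, 0 <= mu A <= 1) /\
  mu (fun _ => True) = 1 /\
  (forall A B, (forall x, A x -> B x -> False) ->
     mu (fun x => A x \/ B x) = mu A + mu B).

Definition left_fairly_invariant {S : Type} (op : S -> S -> S) (mu : (S -> Prop) -> R) : Prop :=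
  forall s A, acts_inj_left op s A -> mu (lmul_set op s A) = mu A.

Definition left_fairly_amenable {S : Type} (op : S -> S -> S) : Prop :=
  exists mu, fa_prob_measure mu /\ left_fairly_invariant op mu.

Definition fbounded {S : Type} (f : S -> R) : Prop :=
  exists M, forall x, Rabs (f x) <= M.

Definition lsum {S : Type} (f : S -> R) (l : list S) : R :=
  fold_right (fun t acc => f t + acc) 0 l.

(* (s * f)(x) = sum_{t : s t = x} f t, as an (unordered) sum of non-negative terms:
   L is the supremum of all finite partial sums over distinct t with s t = x.
   Existence of such an L is exactly convergence of the defining sum. *)
Definition conv_sum_is {S : Type} (op : S -> S -> S) (s : S) (f : S -> R) (x : S) (L : R) : Prop :=
  is_lub (fun r => exists l : list S, NoDup l /\ (forall t, In t l -> op s t = x) /\ r = lsum f l) L.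

(* Simple functions: finite lists of (coefficient, set), meaning sum_i a_i chi_{A_i}. *)
Definition indic {S : Type} (A : S -> Prop) (x : S) : R :=
  if excluded_middle_informative (A x) then 1 else 0.

Definition simple_eval {S : Type} (h : list (R * (S -> Prop))) (x : S) : R :=
  fold_right (fun p acc => fst p * indic (snd p) x + acc) 0 h.

Definition simple_integral {S : Type} (mu : (S -> Prop) -> R) (h : list (R * (S -> Prop))) : R :=
  fold_right (fun p acc => fst p * mu (snd p) + acc) 0 h.

Definition integral_is {S : Type} (mu : (S -> Prop) -> R) (f : S -> R) (I : R) : Prop :=
  is_lub (fun r => exists h : list (R * (S -> Prop)),
            (forall p, In p h -> 0 <= fst p) /\
            (forall x, simple_eval h x <= f x) /\
            r = simple_integral mu h) I.

(* Main.v *)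
Require Import Defs.
From Stdlib Require Import Reals List Lra Lia Psatz Classical ClassicalEpsilon ClassicalDescription FunctionalExtensionality PropExtensionality.
Import ListNotations.
Open Scope R_scope.

Lemma mu_ext {S : Type} (mu : (S -> Prop) -> R) (A B : S -> Prop) :
  (forall x, A x <-> B x) -> mu A = mu B.
Proof.
  intro H. f_equal. apply functional_extensionality. intro x.
  apply propositional_extensionality. apply H.
Qed.

Lemma mu_nonneg {S : Type} (mu : (S -> Prop) -> R) (Hmu : fa_prob_measure mu) A : 0 <= mu A.
Proof. destruct Hmu as [H _]. apply H. Qed.

Lemma mu_split {S : Type} (mu : (S -> Prop) -> R) (Hmu : fa_prob_measure mu) (C B : S -> Prop) :
  mu C = mu (fun x => C x /\ B x) + mu (fun x => C x /\ ~ B x).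
Proof.
  destruct Hmu as [_ [_ Had]].
  rewrite <- Had by (intros x [_ h1] [_ h2]; tauto).
  apply mu_ext. intro x. destruct (classic (B x)); tauto.
Qed.

Lemma mu_empty {S : Type} (mu : (S -> Prop) -> R) (Hmu : fa_prob_measure mu) (C : S -> Prop) :
  (forall x, ~ C x) -> mu C = 0.
Proof.
  intro H. pose proof (mu_split mu Hmu C C) as E.
  rewrite (mu_ext mu (fun x => C x /\ C x) C) in E by tauto.
  rewrite (mu_ext mu (fun x => C x /\ ~ C x) C) in E.
  - lra.
  - intro x. specialize (H x). tauto.
Qed.

Definition SIC {S : Type} (mu : (S -> Prop) -> R) (C : S -> Prop) (h : list (R * (S -> Prop))) : R :=
  fold_right (fun p acc => fst p * mu (fun x => snd p x /\ C x) + acc) 0 h.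

Lemma SIC_split {S : Type} (mu : (S -> Prop) -> R) (Hmu : fa_prob_measure mu) C B h :
  SIC mu C h = SIC mu (fun x => C x /\ B x) h + SIC mu (fun x => C x /\ ~ B x) h.
Proof.
  induction h as [|[a A] h IH]; simpl; [lra|].
  rewrite IH. rewrite (mu_split mu Hmu (fun x => A x /\ C x) B).
  rewrite (mu_ext mu (fun x => (A x /\ C x) /\ B x) (fun x => A x /\ C x /\ B x)) by tauto.
  rewrite (mu_ext mu (fun x => (A x /\ C x) /\ ~ B x) (fun x => A x /\ C x /\ ~ B x)) by tauto.
  ring.
Qed.

Lemma indic_T {S : Type} (A : S -> Prop) x : A x -> indic A x = 1.
Proof. intro H. unfold indic. destruct (excluded_middle_informative (A x)); first [reflexivity | tauto]. Qed.
Lemma indic_F {S : Type} (A : S -> Prop) x : ~ A x -> indic A x = 0.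
Proof. intro H. unfold indic. destruct (excluded_middle_informative (A x)); first [reflexivity | tauto]. Qed.

Lemma cmp_base {S : Type} (mu : (S -> Prop) -> R) (Hmu : fa_prob_measure mu) :
  forall h2 C c d, (forall x, C x -> c <= d + simple_eval h2 x) ->
  c * mu C <= d * mu C + SIC mu C h2.
Proof.
  induction h2 as [|[b B] h2 IH]; intros C c d H.
  - simpl. destruct (classic (exists x, C x)) as [[x Cx]|NC].
    + specialize (H x Cx); simpl in H. pose proof (mu_nonneg mu Hmu C). nra.
    + rewrite (mu_empty mu Hmu C) by (intros x Cx; apply NC; eauto). lra.
  - simpl. rewrite (mu_split mu Hmu C B). rewrite (SIC_split mu Hmu C B h2).
    assert (IH1 := IH (fun x => C x /\ B x) c (d+b)).
    assert (IH2 := IH (fun x => C x /\ ~ B x) c d).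
    rewrite (mu_ext mu (fun x => B x /\ C x) (fun x => C x /\ B x)) by tauto.
    assert (c * mu (fun x => C x /\ B x) <= (d + b) * mu (fun x => C x /\ B x) + SIC mu (fun x => C x /\ B x) h2).
    { apply IH1. intros x [Cx Bx]. specialize (H x Cx). simpl in H. rewrite indic_T in H by auto. simpl. lra. }
    assert (c * mu (fun x => C x /\ ~ B x) <= d * mu (fun x => C x /\ ~ B x) + SIC mu (fun x => C x /\ ~ B x) h2).
    { apply IH2. intros x [Cx Bx]. specialize (H x Cx). simpl in H. rewrite indic_F in H by auto. simpl. lra. }
    lra.
Qed.

Lemma cmp_main {S : Type} (mu : (S -> Prop) -> R) (Hmu : fa_prob_measure mu) :
  forall h1 h2 C c d, (forall x, C x -> c + simple_eval h1 x <= d + simple_eval h2 x) ->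
  c * mu C + SIC mu C h1 <= d * mu C + SIC mu C h2.
Proof.
  induction h1 as [|[a A] h1 IH]; intros h2 C c d H.
  - simpl. assert (c * mu C <= d * mu C + SIC mu C h2); [|lra].
    apply cmp_base; auto. intros x Cx. specialize (H x Cx). simpl in H. lra.
  - simpl. rewrite (mu_split mu Hmu C A). rewrite (SIC_split mu Hmu C A h1), (SIC_split mu Hmu C A h2).
    rewrite (mu_ext mu (fun x => A x /\ C x) (fun x => C x /\ A x)) by tauto.
    assert ((c + a) * mu (fun x => C x /\ A x) + SIC mu (fun x => C x /\ A x) h1 <= d * mu (fun x => C x /\ A x) + SIC mu (fun x => C x /\ A x) h2).
    { apply IH. intros x [Cx Ax]. specialize (H x Cx). simpl in H. rewrite indic_T in H by auto. lra. }
    assert (c * mu (fun x => C x /\ ~ A x) + SIC mu (fun x => C x /\ ~ A x) h1 <= d * mu (fun x => C x /\ ~ A x) + SIC mu (fun x => C x /\ ~ A x) h2).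
    { apply IH. intros x [Cx Ax]. specialize (H x Cx). simpl in H. rewrite indic_F in H by auto. lra. }
    lra.
Qed.

Lemma SI_SIC {S : Type} (mu : (S -> Prop) -> R) h :
  simple_integral mu h = SIC mu (fun _ => True) h.
Proof.
  induction h as [|[a A] h IH]; simpl; auto.
  rewrite IH. rewrite (mu_ext mu (fun x => A x /\ True) A) by tauto. reflexivity.
Qed.

Lemma SI_mono {S : Type} (mu : (S -> Prop) -> R) (Hmu : fa_prob_measure mu) h1 h2 c :
  (forall x, simple_eval h1 x <= simple_eval h2 x + c) ->
  simple_integral mu h1 <= simple_integral mu h2 + c.
Proof.
  intro H. rewrite !SI_SIC.
  pose proof (cmp_main mu Hmu h1 h2 (fun _ => True) 0 c) as K.
  destruct Hmu as [_ [H1 _]]. rewrite H1 in K.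
  assert (0 * 1 + SIC mu (fun _ => True) h1 <= c * 1 + SIC mu (fun _ => True) h2); [|lra].
  apply K. intros x _. specialize (H x). lra.
Qed.

Lemma eval_nonneg {S : Type} (h : list (R * (S -> Prop))) x :
  (forall p, In p h -> 0 <= fst p) -> 0 <= simple_eval h x.
Proof.
  induction h as [|[a A] h IH]; simpl; intros H; [lra|].
  assert (0 <= a) by (apply (H (a, A)); auto).
  assert (0 <= simple_eval h x) by (apply IH; auto).
  unfold indic; destruct (excluded_middle_informative (A x)); nra.
Qed.

Lemma eval_app {S : Type} (h1 h2 : list (R * (S -> Prop))) x :
  simple_eval (h1 ++ h2) x = simple_eval h1 x + simple_eval h2 x.
Proof. induction h1; simpl; [ring|]. rewrite IHh1. ring. Qed.

Lemma SI_app {S : Type} mu (h1 h2 : list (R * (S -> Prop))) :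
  simple_integral mu (h1 ++ h2) = simple_integral mu h1 + simple_integral mu h2.
Proof. induction h1; simpl; [ring|]. rewrite IHh1. ring. Qed.

Lemma approx {S : Type} eps (He : 0 < eps) : forall K (g : S -> R),
  (forall x, 0 <= g x <= INR K * eps) ->
  exists h, (forall p, In p h -> 0 <= fst p) /\ (forall x, simple_eval h x <= g x) /\
            (forall x, g x <= simple_eval h x + eps).
Proof.
  induction K; intros g Hg.
  - exists []. simpl. split; [tauto|]. split; intros x; specialize (Hg x); simpl in Hg; lra.
  - set (g' := fun x => if Rle_dec eps (g x) then g x - eps else 0).
    destruct (IHK g') as [h' [H1 [H2 H3]]].
    { intro x. unfold g'. pose proof (pos_INR K). specialize (Hg x). rewrite S_INR in Hg.
      destruct Rle_dec; split; nra. }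
    exists ((eps, fun x => eps <= g x) :: h'). split; [|split].
    + intros p [<-|Hp]; simpl; [lra|auto].
    + intro x. simpl. specialize (H2 x). unfold g' in H2. destruct (Rle_dec eps (g x)).
      * rewrite indic_T by auto. lra.
      * rewrite indic_F by auto. specialize (Hg x). lra.
    + intro x. simpl. specialize (H3 x). unfold g' in H3. destruct (Rle_dec eps (g x)).
      * rewrite indic_T by auto. lra.
      * rewrite indic_F by auto. pose proof (eval_nonneg h' x H1). lra.
Qed.

Definition Lspec {T : Type} (op : T -> T -> T) (s : T) (Q : T -> Prop) (N : nat) (x : T) (l : list T) : Prop :=
  NoDup l /\ (forall t, In t l -> op s t = x /\ Q t) /\
  (length l = N \/ ((length l < N)%nat /\ forall t, op s t = x -> Q t -> In t l)).

Lemma L_exists_x {T : Type} (op : T -> T -> T) s Q x : forall N, exists l, Lspec op s Q N x l.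
Proof.
  induction N as [|n [l [Hnd [Hin Hl]]]].
  - exists []. split; [constructor|]. split; [simpl; tauto|]. left; reflexivity.
  - destruct Hl as [Hlen|[Hlt Hc]].
    + destruct (classic (exists t, op s t = x /\ Q t /\ ~ In t l)) as [[t [E [Qt Nt]]]|Hno].
      * exists (t :: l). split; [constructor; auto|]. split.
        { intros u [<-|Hu]; auto. }
        left. simpl. lia.
      * exists l. split; [auto|]. split; [auto|]. right. split; [lia|].
        intros t E Qt. destruct (classic (In t l)); auto. exfalso; apply Hno; eauto.
    + exists l. split; [auto|]. split; [auto|]. right. split; [lia|auto].
Qed.

Lemma L_exists {T : Type} (op : T -> T -> T) s Q N : exists L : T -> list T, forall x, Lspec op s Q N x (L x).
Proof.
  exists (fun x => proj1_sig (constructive_indefinite_description _ (L_exists_x op s Q x N))).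
  intro x. exact (proj2_sig (constructive_indefinite_description _ (L_exists_x op s Q x N))).
Qed.

Fixpoint sumk (n : nat) (F : nat -> R) : R :=
  match n with O => 0 | S n' => F O + sumk n' (fun k => F (S k)) end.

Fixpoint bigcat {X : Type} (n : nat) (G : nat -> list X) : list X :=
  match n with O => [] | S n' => G O ++ bigcat n' (fun k => G (S k)) end.

Lemma eval_bigcat {T : Type} n : forall (G : nat -> list (R * (T -> Prop))) x,
  simple_eval (bigcat n G) x = sumk n (fun k => simple_eval (G k) x).
Proof. induction n; intros; simpl; auto. rewrite eval_app, IHn. reflexivity. Qed.

Lemma SI_bigcat {T : Type} mu n : forall (G : nat -> list (R * (T -> Prop))),
  simple_integral mu (bigcat n G) = sumk n (fun k => simple_integral mu (G k)).
Proof. induction n; intros; simpl; auto. rewrite SI_app, IHn. reflexivity. Qed.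

Lemma bigcat_coef {T : Type} n : forall (G : nat -> list (R * (T -> Prop))),
  (forall k p, In p (G k) -> 0 <= fst p) -> forall p, In p (bigcat n G) -> 0 <= fst p.
Proof.
  induction n; intros G H p Hp; simpl in Hp; [tauto|].
  apply in_app_iff in Hp. destruct Hp as [Hp|Hp]; eauto.
  apply (IHn (fun k => G (S k))); [intros k q Hq; apply (H (S k) q Hq)|exact Hp].
Qed.

Lemma sumk_ext_lt n : forall F G, (forall k, (k < n)%nat -> F k = G k) -> sumk n F = sumk n G.
Proof.
  induction n; intros F G H; simpl; auto.
  rewrite (H 0%nat) by lia. f_equal. apply IHn. intros k Hk. apply H. lia.
Qed.

Lemma sumk_le n : forall F G, (forall k, F k <= G k) -> sumk n F <= sumk n G.
Proof.
  induction n; intros F G H; simpl; [lra|].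
  pose proof (H 0%nat). pose proof (IHn (fun k => F (S k)) (fun k => G (S k)) (fun k => H (S k))). lra.
Qed.

Lemma sumk_const n c : sumk n (fun _ => c) = INR n * c.
Proof. induction n; simpl sumk; [simpl; ring|]. rewrite IHn, S_INR. ring. Qed.

Lemma sumk_zero n : forall F, (forall k, F k = 0) -> sumk n F = 0.
Proof. induction n; intros F H; simpl; auto. rewrite H, IHn; auto. ring. Qed.

Lemma lsum_app {T : Type} (f : T -> R) l1 l2 : lsum f (l1 ++ l2) = lsum f l1 + lsum f l2.
Proof. induction l1; simpl; [ring|]. rewrite IHl1. ring. Qed.

Lemma lsum_nonneg {T : Type} (f : T -> R) l : (forall t, 0 <= f t) -> 0 <= lsum f l.
Proof. intro H. induction l; simpl; [lra|]. pose proof (H a). lra. Qed.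

Lemma lsum_incl {T : Type} (f : T -> R) (Hf : forall t, 0 <= f t) :
  forall l L, NoDup l -> (forall t, In t l -> In t L) -> lsum f l <= lsum f L.
Proof.
  induction l as [|a l IH]; intros L Hnd Hi; simpl.
  - apply lsum_nonneg; auto.
  - destruct (in_split a L (Hi a (or_introl eq_refl))) as [L1 [L2 E]]. subst L.
    inversion Hnd; subst.
    rewrite lsum_app. simpl.
    assert (lsum f l <= lsum f (L1 ++ L2)).
    { apply IH; auto. intros t Ht. assert (In t (L1 ++ a :: L2)) by (apply Hi; right; auto).
      apply in_app_iff in H. apply in_app_iff. destruct H as [H|[H|H]]; auto. subst; contradiction. }
    rewrite lsum_app in H. lra.
Qed.

Lemma lsum_mono {T : Type} (f g : T -> R) l : (forall t, In t l -> f t <= g t) -> lsum f l <= lsum g l.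
Proof.
  induction l; simpl; intros H; [lra|].
  pose proof (H a (or_introl eq_refl)). assert (lsum f l <= lsum g l) by (apply IHl; auto). lra.
Qed.

Lemma lsum_cons {T : Type} (f : T -> R) a l : lsum f (a :: l) = f a + lsum f l.
Proof. reflexivity. Qed.
Lemma lsum_nil {T : Type} (f : T -> R) : lsum f [] = 0.
Proof. reflexivity. Qed.

Lemma lsum_ge {T : Type} (f : T -> R) c l : (forall t, In t l -> c <= f t) -> INR (length l) * c <= lsum f l.
Proof.
  induction l; simpl length; rewrite ?lsum_cons, ?lsum_nil; intros H; [simpl; lra|].
  rewrite S_INR. pose proof (H a (or_introl eq_refl)). assert (INR (length l) * c <= lsum f l) by (apply IHl; intros t Ht; apply H; right; exact Ht). lra.
Qed.

Lemma lsum_le_plus {T : Type} (f g : T -> R) c l : (forall t, f t <= g t + c) -> lsum f l <= lsum g l + INR (length l) * c.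
Proof.
  intro H. induction l; simpl length; rewrite ?lsum_cons, ?lsum_nil; [simpl; lra|].
  rewrite S_INR. pose proof (H a). lra.
Qed.

Lemma sum_nth {T : Type} (G : T -> R) : forall l n, (length l <= n)%nat ->
  sumk n (fun k => match nth_error l k with Some t => G t | None => 0 end) = lsum G l.
Proof.
  induction l as [|a l IH]; intros n Hn.
  - simpl. apply sumk_zero. intros [|k]; reflexivity.
  - destruct n as [|n]; simpl in Hn; [lia|]. simpl. f_equal. apply IH. lia.
Qed.

Lemma sum_ind {T : Type} (t : T) (v : R) : forall l n F,
  (forall k, (nth_error l k = Some t -> F k = v) /\ (nth_error l k <> Some t -> F k = 0)) ->
  NoDup l -> (length l <= n)%nat ->
  (In t l -> sumk n F = v) /\ (~ In t l -> sumk n F = 0).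
Proof.
  induction l as [|a l IH]; intros n F HF Hnd Hn.
  - split; [simpl; tauto|]. intros _. apply sumk_zero. intro k. apply (proj2 (HF k)).
    destruct k; simpl; discriminate.
  - destruct n as [|n]; simpl in Hn; [lia|]. inversion Hnd; subst. simpl sumk.
    destruct (IH n (fun k => F (S k))) as [I1 I2]; [intro k; exact (HF (S k))|assumption|lia|].
    destruct (classic (a = t)) as [<-|Ha].
    + rewrite (proj1 (HF 0%nat)) by reflexivity. rewrite I2 by auto. split; intros; [ring|].
      exfalso; apply H; left; auto.
    + rewrite (proj2 (HF 0%nat)) by (simpl; intro E; inversion E; auto).
      split; intros Hin.
      * destruct Hin as [E|Hin]; [contradiction|]. rewrite I1; auto; ring.
      * rewrite I2; [ring|]. intro; apply Hin; right; auto.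
Qed.

Definition Dk {T : Type} (op : T -> T -> T) s (L : T -> list T) (k : nat) : T -> Prop :=
  fun t => nth_error (L (op s t)) k = Some t.
Definition restr {T : Type} (D : T -> Prop) (h : list (R * (T -> Prop))) :=
  map (fun p => (fst p, fun t => snd p t /\ D t)) h.
Definition Tk {T : Type} (op : T -> T -> T) s L k (h : list (R * (T -> Prop))) :=
  map (fun p => (fst p, lmul_set op s (fun t => snd p t /\ Dk op s L k t))) h.

Lemma eval_restr_T {T : Type} (D : T -> Prop) h t : D t -> simple_eval (restr D h) t = simple_eval h t.
Proof.
  intro Dt. induction h as [|[a A] h IH]; simpl; auto. rewrite IH. f_equal. f_equal.
  destruct (classic (A t)). rewrite !indic_T; tauto. rewrite !indic_F; tauto.
Qed.

Lemma eval_restr_F {T : Type} (D : T -> Prop) h t : ~ D t -> simple_eval (restr D h) t = 0.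
Proof.
  intro Dt. induction h as [|[a A] h IH]; simpl; auto. rewrite IH. rewrite indic_F by tauto. ring.
Qed.

Lemma map_coef {T : Type} (F : (T -> Prop) -> (T -> Prop)) h :
  (forall p, In p h -> 0 <= fst p) -> forall p, In p (map (fun p => (fst p, F (snd p))) h) -> 0 <= fst p.
Proof.
  intros H p Hp. apply in_map_iff in Hp. destruct Hp as [q [<- Hq]]. simpl. auto.
Qed.

Lemma SI_Tk {T : Type} (op : T -> T -> T) s mu (Hinv : left_fairly_invariant op mu) L k h :
  simple_integral mu (Tk op s L k h) = simple_integral mu (restr (Dk op s L k) h).
Proof.
  induction h as [|[a A] h IH]; simpl; auto. rewrite IH. f_equal. f_equal.
  apply Hinv. intros u v [_ Du] [_ Dv] E. unfold Dk in *. rewrite E in Du. rewrite Du in Dv.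
  inversion Dv; auto.
Qed.

Lemma eval_Tk {T : Type} (op : T -> T -> T) s L (HL : forall x t, In t (L x) -> op s t = x) k h x :
  simple_eval (Tk op s L k h) x = match nth_error (L x) k with Some t => simple_eval h t | None => 0 end.
Proof.
  destruct (nth_error (L x) k) as [t|] eqn:E; induction h as [|[a A] h IH]; simpl; auto.
  - rewrite IH. f_equal. f_equal. assert (Et : op s t = x) by (apply HL; eapply nth_error_In; eauto).
    destruct (classic (A t)) as [At|At].
    + rewrite !indic_T; auto. exists t. split; auto. split; auto. unfold Dk. rewrite Et. auto.
    + rewrite (indic_F A) by auto. apply indic_F. intros [u [[Au Du] Eu]]. unfold Dk in Du.
      rewrite <- Eu in Du. rewrite E in Du. inversion Du; subst. contradiction.
  - rewrite IH. rewrite indic_F; [ring|]. intros [u [[Au Du] Eu]]. unfold Dk in Du.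
    rewrite <- Eu in Du. rewrite E in Du. discriminate.
Qed.

Lemma eval_bigcat_Tk {T : Type} (op : T -> T -> T) s L N
  (HL : forall x t, In t (L x) -> op s t = x) (HN : forall x, (length (L x) <= N)%nat) h x :
  simple_eval (bigcat N (fun k => Tk op s L k h)) x = lsum (simple_eval h) (L x).
Proof.
  rewrite eval_bigcat. rewrite <- (sum_nth _ (L x) N (HN x)).
  apply sumk_ext_lt. intros k _. apply eval_Tk; auto.
Qed.

Lemma SI_bigcat_Tk {T : Type} (op : T -> T -> T) s mu (Hinv : left_fairly_invariant op mu) L N h :
  simple_integral mu (bigcat N (fun k => Tk op s L k h)) =
  simple_integral mu (bigcat N (fun k => restr (Dk op s L k) h)).
Proof.
  rewrite !SI_bigcat. apply sumk_ext_lt. intros k _. apply SI_Tk; auto.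
Qed.

Lemma eval_bigcat_restr {T : Type} (op : T -> T -> T) s L N
  (HND : forall x, NoDup (L x)) (HN : forall x, (length (L x) <= N)%nat) h t :
  (In t (L (op s t)) -> simple_eval (bigcat N (fun k => restr (Dk op s L k) h)) t = simple_eval h t) /\
  (~ In t (L (op s t)) -> simple_eval (bigcat N (fun k => restr (Dk op s L k) h)) t = 0).
Proof.
  rewrite eval_bigcat. apply sum_ind; auto.
  intro k. split; intro H.
  - apply eval_restr_T. exact H.
  - apply eval_restr_F. exact H.
Qed.

Lemma Tk_coef {T : Type} (op : T -> T -> T) s L h :
  (forall p, In p h -> 0 <= fst p) -> forall k p, In p (Tk op s L k h) -> 0 <= fst p.
Proof.
  intros H k p Hp. unfold Tk in Hp. apply in_map_iff in Hp. destruct Hp as [q [<- Hq]]. simpl. auto.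
Qed.

Lemma restr_le {T : Type} (op : T -> T -> T) s mu (Hmu : fa_prob_measure mu) L N
  (HND : forall x, NoDup (L x)) (HN : forall x, (length (L x) <= N)%nat) h :
  (forall p, In p h -> 0 <= fst p) ->
  simple_integral mu (bigcat N (fun k => restr (Dk op s L k) h)) <= simple_integral mu h.
Proof.
  intro Hc. assert (K := SI_mono mu Hmu (bigcat N (fun k => restr (Dk op s L k) h)) h 0).
  rewrite Rplus_0_r in K. apply K. intro t.
  destruct (eval_bigcat_restr op s L N HND HN h t) as [E1 E2].
  destruct (classic (In t (L (op s t)))) as [Hi|Hi].
  - rewrite E1 by auto. lra.
  - rewrite E2 by auto. pose proof (eval_nonneg h t Hc). lra.
Qed.

Definition Iset {T : Type} (mu : (T -> Prop) -> R) (g : T -> R) : R -> Prop :=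
  fun r => exists h : list (R * (T -> Prop)),
            (forall p, In p h -> 0 <= fst p) /\
            (forall x, simple_eval h x <= g x) /\
            r = simple_integral mu h.

Lemma dirA {T : Type} (op : T -> T -> T) mu (Hmu : fa_prob_measure mu) (Hinv : left_fairly_invariant op mu)
  s (f : T -> R) (Hf0 : forall x, 0 <= f x) M (HM : forall x, f x <= M)
  sf (Hsf : forall x, conv_sum_is op s f x (sf x)) M' (HM' : forall x, sf x <= M')
  Isf (HI : is_upper_bound (Iset mu sf) Isf) eps (He : 0 < eps) :
  forall h, (forall p, In p h -> 0 <= fst p) -> (forall x, simple_eval h x <= f x) ->
  simple_integral mu h <= Isf + 2 * eps.
Proof.
  intros h Hhc Hhf.
  destruct (INR_unbounded (M' / eps)) as [N HN].
  assert (HN' : M' < INR N * eps).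
  { replace M' with (M' / eps * eps) by (field; lra). apply Rmult_lt_compat_r; lra. }
  destruct (L_exists op s (fun t => eps <= f t) N) as [L HL].
  assert (Hcomp : forall x, (length (L x) < N)%nat /\ forall t, op s t = x -> eps <= f t -> In t (L x)).
  { intro x. destruct (HL x) as [Hnd [Hin [Hlen|Hc]]]; [exfalso|exact Hc].
    assert (A1 : INR (length (L x)) * eps <= lsum f (L x)) by (apply lsum_ge; intros t Ht; apply (Hin t Ht)).
    assert (A2 : lsum f (L x) <= sf x).
    { apply (proj1 (Hsf x)). exists (L x). split; auto. split; auto. intros t Ht; apply (Hin t Ht). }
    rewrite Hlen in A1. specialize (HM' x). lra. }
  assert (HLin : forall x t, In t (L x) -> op s t = x) by (intros x t Ht; apply (proj1 (proj2 (HL x)) t Ht)).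
  assert (HND : forall x, NoDup (L x)) by (intro x; apply (HL x)).
  assert (HLN : forall x, (length (L x) <= N)%nat) by (intro x; pose proof (proj1 (Hcomp x)); lia).
  set (g := fun t => if Rle_dec eps (f t) then f t else 0).
  assert (Hgf : forall t, g t <= f t) by (intro t; unfold g; destruct Rle_dec; [lra|apply Hf0]).
  assert (Hfg : forall t, f t <= g t + eps) by (intro t; unfold g; destruct Rle_dec; lra).
  destruct (INR_unbounded (M / eps)) as [K HK].
  assert (HK' : M < INR K * eps).
  { replace M with (M / eps * eps) by (field; lra). apply Rmult_lt_compat_r; lra. }
  destruct (approx eps He K g) as [hg [Hc1 [Hc2 Hc3]]].
  { intro x. unfold g. specialize (HM x). specialize (Hf0 x). destruct Rle_dec; lra. }
  set (H := bigcat N (fun k => Tk op s L k hg)).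
  assert (S1 : simple_integral mu hg <= simple_integral mu H).
  { unfold H. rewrite (SI_bigcat_Tk op s mu Hinv).
    assert (K1 := SI_mono mu Hmu hg (bigcat N (fun k => restr (Dk op s L k) hg)) 0).
    rewrite Rplus_0_r in K1. apply K1. intro t.
    destruct (eval_bigcat_restr op s L N HND HLN hg t) as [E1 E2].
    destruct (classic (In t (L (op s t)))) as [Hi|Hi].
    - rewrite E1 by auto. lra.
    - rewrite E2 by auto. specialize (Hc2 t). unfold g in Hc2. destruct Rle_dec as [r|r].
      + exfalso. apply Hi. apply (proj2 (Hcomp (op s t))); auto.
      + lra. }
  assert (S2 : simple_integral mu H <= Isf).
  { apply HI. exists H. split; [|split; [|reflexivity]].
    - unfold H. apply bigcat_coef. apply Tk_coef. auto.
    - intro x. unfold H. rewrite (eval_bigcat_Tk op s L N HLin HLN).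
      apply Rle_trans with (lsum f (L x)).
      + apply lsum_mono. intros t _. specialize (Hc2 t). specialize (Hgf t). lra.
      + apply (proj1 (Hsf x)). exists (L x). split; [auto|split; [exact (HLin x)|reflexivity]]. }
  assert (S3 : simple_integral mu h <= simple_integral mu hg + 2 * eps).
  { apply SI_mono; auto. intro x. specialize (Hhf x). specialize (Hfg x). specialize (Hc3 x). lra. }
  lra.
Qed.

Lemma dirB {T : Type} (op : T -> T -> T) mu (Hmu : fa_prob_measure mu) (Hinv : left_fairly_invariant op mu)
  s (f : T -> R) (Hf0 : forall x, 0 <= f x) M (HM : forall x, f x <= M)
  sf (Hsf : forall x, conv_sum_is op s f x (sf x)) M1 (HM1 : forall x, sf x <= M1) (HM10 : 0 <= M1)
  If (HI : is_upper_bound (Iset mu f) If) eps (He : 0 < eps) :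
  forall h, (forall p, In p h -> 0 <= fst p) -> (forall x, simple_eval h x <= sf x) ->
  simple_integral mu h <= If + 2 * eps.
Proof.
  intros h Hhc Hhf.
  destruct (INR_unbounded (M1 / eps)) as [N0 HN0].
  set (N := S N0).
  assert (HNpos : 0 < INR N) by (unfold N; rewrite S_INR; pose proof (pos_INR N0); lra).
  assert (HN' : M1 < INR N * eps).
  { apply Rle_lt_trans with (M1 / eps * eps); [right; field; lra|].
    apply Rmult_lt_compat_r; [lra|]. unfold N. rewrite S_INR. lra. }
  destruct (L_exists op s (fun _ => True) N) as [L HL].
  assert (HLin : forall x t, In t (L x) -> op s t = x) by (intros x t Ht; apply (proj1 (proj2 (HL x)) t Ht)).
  assert (HND : forall x, NoDup (L x)) by (intro x; apply (HL x)).
  assert (HLN : forall x, (length (L x) <= N)%nat).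
  { intro x. destruct (HL x) as [_ [_ [E|[E _]]]]; lia. }
  set (X := fun x => length (L x) = N).
  assert (HmuX : INR N * mu X <= 1).
  { set (h1 := [(1, fun t => X (op s t))]).
    assert (C1 : forall p, In p h1 -> 0 <= fst p) by (intros p [<-|[]]; simpl; lra).
    pose proof (restr_le op s mu Hmu L N HND HLN h1 C1) as R1.
    rewrite <- (SI_bigcat_Tk op s mu Hinv) in R1. rewrite SI_bigcat in R1.
    rewrite (sumk_ext_lt N _ (fun _ => mu X)) in R1.
    - rewrite sumk_const in R1. change (simple_integral mu h1) with (1 * mu (fun t => X (op s t)) + 0) in R1. destruct Hmu as [Hb _].
      pose proof (Hb (fun t => X (op s t))). lra.
    - intros k Hk. simpl. rewrite Rmult_1_l, Rplus_0_r. apply mu_ext. intro x. split.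
      + intros [t [[Xt _] ->]]. exact Xt.
      + intro Xx. destruct (nth_error (L x) k) as [t|] eqn:E.
        * assert (Et : op s t = x) by (apply HLin; eapply nth_error_In; eauto).
          exists t. split; [split|].
          -- rewrite Et. exact Xx.
          -- unfold Dk. rewrite Et. exact E.
          -- auto.
        * exfalso. apply nth_error_None in E. unfold X in Xx. lia. }
  set (eps' := eps / INR N).
  assert (He' : 0 < eps') by (unfold eps'; apply Rdiv_lt_0_compat; lra).
  destruct (INR_unbounded (M / eps')) as [K HK].
  assert (HK' : M < INR K * eps').
  { replace M with (M / eps' * eps') by (field; lra). apply Rmult_lt_compat_r; lra. }
  destruct (approx eps' He' K f) as [hf [Hc1 [Hc2 Hc3]]].
  { intro x. specialize (HM x). specialize (Hf0 x). lra. }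
  set (H := bigcat N (fun k => Tk op s L k hf)).
  assert (P : forall x, simple_eval h x <= simple_eval (H ++ [(M1, X)]) x + INR N * eps').
  { intro x. rewrite eval_app. unfold H. rewrite (eval_bigcat_Tk op s L N HLin HLN). change (simple_eval [(M1, X)] x) with (M1 * indic X x + 0).
    specialize (Hhf x).
    assert (Z1 : 0 <= lsum (simple_eval hf) (L x)) by (apply lsum_nonneg; intro; apply eval_nonneg; auto).
    destruct (HL x) as [Hnd [Hin [Hlen|[Hlt Hc]]]].
    - rewrite indic_T by exact Hlen. specialize (HM1 x). nra.
    - rewrite indic_F by (unfold X; lia).
      assert (A1 : sf x <= lsum f (L x)).
      { apply (proj2 (Hsf x)). intros r [l [Hnd' [Hl' ->]]]. apply lsum_incl; [exact Hf0|exact Hnd'|].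
        intros t Ht. apply Hc; auto. }
      assert (A2 := lsum_le_plus f (simple_eval hf) eps' (L x) Hc3).
      assert (A3 : INR (length (L x)) <= INR N) by (apply le_INR; lia).
      nra. }
  assert (S1 := SI_mono mu Hmu _ _ _ P). rewrite SI_app in S1. change (simple_integral mu [(M1, X)]) with (M1 * mu X + 0) in S1.
  assert (S2 : simple_integral mu H <= simple_integral mu hf).
  { unfold H. rewrite (SI_bigcat_Tk op s mu Hinv). apply restr_le; auto. }
  assert (S3 : simple_integral mu hf <= If) by (apply HI; exists hf; auto).
  assert (S4 : M1 * mu X <= eps).
  { pose proof (mu_nonneg mu Hmu X). nra. }
  assert (S5 : INR N * eps' = eps) by (unfold eps'; field; lra).
  lra.
Qed.

Theorem mainTheorem2 (S : Type) (op : S -> S -> S) (Hassoc : associative op)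
  (mu : (S -> Prop) -> R) (Hmu : fa_prob_measure mu) (Hinv : left_fairly_invariant op mu)
  (s : S) (f : S -> R) (Hf0 : forall x, 0 <= f x) (Hfb : fbounded f)
  (sf : S -> R) (Hsf : forall x, conv_sum_is op s f x (sf x)) (Hsfb : fbounded sf) :
  exists I, integral_is mu sf I /\ integral_is mu f I.
Proof.
  destruct Hfb as [M HM]. destruct Hsfb as [M' HM'].
  assert (HM2 : forall x, f x <= M) by (intro x; specialize (HM x); pose proof (Rle_abs (f x)); lra).
  assert (HM3 : forall x, sf x <= Rabs M').
  { intro x; specialize (HM' x); pose proof (Rle_abs (sf x)); pose proof (Rle_abs M'); lra. }
  assert (Hsf0 : forall x, 0 <= sf x).
  { intro x. apply (proj1 (Hsf x)). exists []. split; [constructor|]. split; [simpl; tauto|reflexivity]. }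
  assert (Hex : forall g B, (forall x, 0 <= g x) -> (forall x, g x <= B) -> {m | is_lub (Iset mu g) m}).
  { intros g B H0 HB. apply completeness.
    - exists B. intros r [h [Hc [Hh ->]]].
      assert (K := SI_mono mu Hmu h [] B). change (simple_integral mu []) with 0 in K.
      rewrite Rplus_0_l in K. apply K.
      intro x. specialize (Hh x). specialize (HB x). change (simple_eval [] x) with 0. lra.
    - exists 0. exists []. split; [simpl; tauto|]. split; [|reflexivity].
      intro x. change (simple_eval [] x) with 0. apply H0. }
  destruct (Hex f M Hf0 HM2) as [If Hf].
  destruct (Hex sf (Rabs M') Hsf0 HM3) as [Isf Hs].
  assert (E : If = Isf).
  { apply Rle_antisym.
    - apply Rle_plus_epsilon. intros eps He. apply (proj2 Hf).
      intros r [h [Hc [Hh ->]]].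
      assert (K := dirA op mu Hmu Hinv s f Hf0 M HM2 sf Hsf (Rabs M') HM3 Isf (proj1 Hs) (eps / 2)
                      ltac:(lra) h Hc Hh). lra.
    - apply Rle_plus_epsilon. intros eps He. apply (proj2 Hs).
      intros r [h [Hc [Hh ->]]].
      assert (K := dirB op mu Hmu Hinv s f Hf0 M HM2 sf Hsf (Rabs M') HM3 (Rabs_pos M') If (proj1 Hf)
                      (eps / 2) ltac:(lra) h Hc Hh). lra. }
  exists If. split; [rewrite E; exact Hs | exact Hf].
Qed.
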